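(* Let $\mathcal{G}$ be a cyclic group of prime order with generator $g$, and let $m$ be a positive integer. Let $\mathcal{A}_{m\text{-}\mathsf{MDL}}$ be a (possibly randomized) $m$-MDL algorithm in the GGM having at most $T$ group operation gates. Then \[\Pr_{\mathcal{A}_{m\text{-}\mathsf{MDL}},\mathbf{x}}\left[\mathcal{A}_{m\text{-}\mathsf{MDL}}^{\mathcal{G}}(g,g^{\mathbf{x}})\rightarrow\mathbf{x}\right]=O\!\left(\left(\frac{e(T+2m+1)^2}{2m|\mathcal{G}|}\right)^m\right),\] where $\mathbf{x}=(x_1,\dots,x_m)$ is uniformly random in $\{0,\dots,|\mathcal{G}|-1\}^m$ and $g^{\mathbf{x}}=(g^{x_1},\dots,g^{x_m})$.
   Context: Generic group model (Maurer-style). Let $\mathcal{G}$ be a cyclic group of known prime order $N$ with generator $g$. A GGM algorithm is a circuit with bit wires (values in $\{0,1\}$) and element wires (values in $\mathbb{Z}_N\cup\{\bot\}$; an element wire holding $x$ is written $g^x$). Bit gates act only on bit wires. Element gates: a labeling gate maps $\lceil\log_2N\rceil$ bit wires representing $x\in\mathbb{Z}_N$ to $g^x$ (or $\bot$ if no such $x$); a group operation gate maps element wires $g^x,g^y$ and a bit $b$ to $g^{x+by}$ (or $\bot$ if an input is $\bot$); an equality gate outputs the bit $1$ iff its two element inputs contain the same element different from $\bot$. The cost measure (group operation complexity) counts labeling and group operation gates; all other gates are free. No two equality gates have the same input wires. The $m$-multiple DL ($m$-MDL) problem asks, given $(g,g^{x_1},\dots,g^{x_m})$ on element wires for uniformly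 random $(x_1,\dots,x_m)\in\{0,\dots,N-1\}^m$, to output $(x_1,\dots,x_m)$. *)

(* Defs.v *)
From mathcomp Require Import all_boot all_order all_algebra.
From mathcomp Require Import reals sequences exp.
Set Implicit Arguments. Unset Strict Implicit. Unset Printing Implicit Defensive.
Import Order.TTheory GRing.Theory Num.Theory.

(* Maurer-style generic group model for a cyclic group of prime order N
   with generator g.  An element wire holding g^x is represented by
   [Some x] (x < N), the error symbol bot by [None]. *)

(* Gates.  Wires of each kind are numbered in creation order:
   bit wires 0 .. r-1 are the random coins of the algorithm, element wires
   0, 1, .., m hold g, g^{x_1}, .., g^{x_m}. *)
Inductive gate : Type :=
  | BitG of (seq bool -> bool)
  | LabelG of seq nat            (* labeling gate: indices of the
                                    ceil(log2 N) bit wires (little endian) *)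
  | OpG of nat & nat & nat       (* group operation: element wires i, j,
                                    bit wire k : g^x, g^y, b |-> g^(x+by) *)
  | EqG of nat & nat.

Record algo : Type := Algo {
  rbits : nat;
  gates : seq gate;
  output : seq bool -> seq nat }.

Definition nbits (N : nat) : nat := up_log 2 N.

Definition bits_value (bs : seq bool) (s : seq nat) : nat :=
  \sum_(i < size s) (nth false bs (nth 0 s i) : nat) * 2 ^ i.

Definition step (N : nat) (st : seq bool * seq (option nat)) (g : gate)
  : seq bool * seq (option nat) :=
  let: (bs, es) := st in
  match g with
  | BitG f => (rcons bs (f bs), es)
  | LabelG s =>
      let v := bits_value bs s in
      (bs, rcons es (if v < N then Some v else None))
  | OpG i j k =>
      (bs, rcons es (match nth None es i, nth None es j with
                     | Some a, Some b => Some ((a + nth false bs k * b) %% N)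
                     | _, _ => None end))
  | EqG i j =>
      (rcons bs (match nth None es i, nth None es j with
                 | Some a, Some b => a == b
                 | _, _ => false end), es)
  end.

Definition run (N m : nat) (A : algo) (coins : {ffun 'I_(rbits A) -> bool})
  (x : {ffun 'I_m -> 'I_N}) : seq bool :=
  (foldl (step N)
     ([seq coins i | i <- enum 'I_(rbits A)],
      Some 1 :: [seq Some (val (x i)) | i <- enum 'I_m])
     (gates A)).1.

(* Well-formedness: gates only read existing wires, labeling gates read
   exactly ceil(log2 N) bit wires. nb / ne = current numbers of wires. *)
Fixpoint wf_gates (N nb ne : nat) (gs : seq gate) : bool :=
  match gs with
  | [::] => true
  | g :: gs' =>
      match g with
      | BitG _ => wf_gates N nb.+1 ne gs'
      | LabelG s => (size s == nbits N) && all (fun i => i < nb) s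
                    && wf_gates N nb ne.+1 gs'
      | OpG i j k => [&& i < ne, j < ne, k < nb & wf_gates N nb ne.+1 gs']
      | EqG i j => [&& i < ne, j < ne & wf_gates N nb.+1 ne gs']
      end
  end.

Definition wf_algo (N m : nat) (A : algo) : bool :=
  wf_gates N (rbits A) m.+1 (gates A).

Fixpoint eq_inputs (gs : seq gate) : seq (nat * nat) :=
  match gs with
  | [::] => [::]
  | EqG i j :: gs' => (minn i j, maxn i j) :: eq_inputs gs'
  | _ :: gs' => eq_inputs gs'
  end.

Definition eq_distinct (A : algo) : bool := uniq (eq_inputs (gates A)).

Definition is_costly (g : gate) : bool :=
  match g with LabelG _ | OpG _ _ _ => true | _ => false end.

Definition group_cost (A : algo) : nat := count is_costly (gates A).

Definition succeeds (N m : nat) (A : algo) (coins : {ffun 'I_(rbits A) -> bool}) (x : {ffun 'I_m -> 'I_N}) :=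
  output A (@run N m A coins x) == [seq val (x i) | i <- enum 'I_m].

Definition success_prob (R : realType) (N m : nat) (A : algo) : R :=
  (#|[set p : {ffun 'I_(rbits A) -> bool} * {ffun 'I_m -> 'I_N}
       | @succeeds N m A p.1 p.2]|)%:R / (2 ^ rbits A * N ^ m)%:R.

(* Main.v *)
Require Import Defs.
From mathcomp Require Import all_boot all_order all_algebra.
From mathcomp Require Import reals sequences exp.
From mathcomp Require Import zify ring lra.
Import Order.TTheory GRing.Theory Num.Theory.
Set Implicit Arguments. Unset Strict Implicit. Unset Printing Implicit Defensive.
Local Open Scope ring_scope.
Definition sym N m := ('F_N * ('I_m -> 'F_N))%type.

Definition evs N m (f : sym N m) (x : {ffun 'I_m -> 'I_N}) : 'F_N :=
  f.1 + \sum_i f.2 i * (x i : nat)%:R.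

Definition tonat N (z : 'F_N) : nat := z.

Definition semE N m (x : {ffun 'I_m -> 'I_N}) (ses : seq (option (sym N m))) :=
  map (omap (fun f => tonat (evs f x))) ses.

Definition toI N (hN : (0 < N)%N) (z : 'F_N) : 'I_N := Ordinal (ltn_pmod (tonat z) hN).

Definition shift N m (hN : (0 < N)%N) (y x1 x2 : {ffun 'I_m -> 'I_N}) (t : 'F_N)
  : {ffun 'I_m -> 'I_N} :=
  [ffun i => toI hN ((y i : nat)%:R + t * ((x2 i : nat)%:R - (x1 i : nat)%:R))].

Lemma toIK N (hN : prime N) (z : 'F_N) : ((toI (prime_gt0 hN) z : nat)%:R : 'F_N) = z.
Proof. by rewrite /= Fp_nat_mod // natr_Zp. Qed.

Lemma natFK N (hN : prime N) (n : nat) : (n < N)%N -> tonat (n%:R : 'F_N) = n.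
Proof. by move=> lt; rewrite /tonat val_Fp_nat // modn_small. Qed.

Lemma tonat_lt N (hN : prime N) (z : 'F_N) : (tonat z < N)%N.
Proof.
by rewrite -(natr_Zp z) /tonat val_Fp_nat // ltn_pmod // prime_gt0.
Qed.

Lemma evs_shift N m (hN : prime N) (f : sym N m) y x1 x2 t :
  evs f (shift (prime_gt0 hN) y x1 x2 t) = evs f y + t * (evs f x2 - evs f x1).
Proof.
rewrite /evs /shift.
under eq_bigr => i _ do rewrite ffunE toIK.
have -> : \sum_i f.2 i * ((y i : nat)%:R + t * ((x2 i : nat)%:R - (x1 i : nat)%:R))
   = \sum_i f.2 i * (y i : nat)%:R + t * (\sum_i f.2 i * (x2 i : nat)%:R
           - \sum_i f.2 i * (x1 i : nat)%:R).
  rewrite -sumrB mulr_sumr -big_split /=; apply: eq_bigr => i _; ring.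
ring.
Qed.

Lemma nth_semE N m x (ses : seq (option (sym N m))) i :
  nth None (semE x ses) i = omap (fun f => tonat (evs f x)) (nth None ses i).
Proof. by elim: ses i => [|a s IH] [|i] //=. Qed.

Definition Bf (q d : nat) : nat := (\sum_(k < d.+1) 'C(q, k))%N.

Lemma Bf0 q : Bf q 0 = 1%N.
Proof. by rewrite /Bf big_ord_recl big_ord0 bin0. Qed.

Lemma Bf_mono q q' d : (q <= q')%N -> (Bf q d <= Bf q' d)%N.
Proof. by move=> le; apply: leq_sum => k _; apply: leq_bin2l. Qed.

Lemma BfS q d : Bf q.+1 d.+1 = (Bf q d.+1 + Bf q d)%N.
Proof.
rewrite /Bf big_ord_recl bin0.
under eq_bigr => k _ do rewrite /bump /= binS.
rewrite big_split /= [X in (_ = X + _)%N]big_ord_recl bin0 addnA.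
by [].
Qed.

Lemma Bf0q d : Bf 0 d = 1%N.
Proof.
rewrite /Bf big_ord_recl bin0 big1 // => k _; by rewrite bin0n.
Qed.

Definition closedS N m (hN : prime N) (S : {set {ffun 'I_m -> 'I_N}}) :=
  forall y x1 x2 t, y \in S -> x1 \in S -> x2 \in S ->
    shift (prime_gt0 hN) y x1 x2 t \in S.

Lemma shrink N m (hN : prime N) (S : {set {ffun 'I_m -> 'I_N}}) (f g : sym N m) x1 x2 :
  closedS hN S -> x1 \in S -> x2 \in S -> evs f x1 = evs g x1 -> evs f x2 != evs g x2 ->
  (N * #|[set x in S | evs f x == evs g x]| <= #|S|)%N.
Proof.
move=> cS x1S x2S e1 n2.
set S1 := [set x in S | evs f x == evs g x].
pose phi (p : {ffun 'I_m -> 'I_N} * 'F_N) := shift (prime_gt0 hN) p.1 x1 x2 p.2.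
have <- : #|phi @: setX S1 [set: 'F_N]| = (N * #|S1|)%N.
  rewrite card_in_imset ?cardsX ?cardsT ?card_Fp 1?mulnC //.
  move=> [y t] [y' t'] /=; rewrite !inE /= !andbT => /andP[_ /eqP ey] /andP[_ /eqP ey'].
  rewrite /phi /= => E.
  have hE : forall z, evs f z - evs g z = evs (f.1 - g.1, fun i => f.2 i - g.2 i) z.
    move=> z; rewrite /evs /=.
    have -> : \sum_i (f.2 i - g.2 i) * (z i : nat)%:R =
       \sum_i (f.2 i * (z i : nat)%:R - g.2 i * (z i : nat)%:R).
      by apply: eq_bigr => i _; rewrite mulrBl.
    rewrite sumrB; ring.
  have H1 := congr1 (fun z => evs f z - evs g z) E.
  rewrite /= !evs_shift in H1.
  have et : t = t'.
    have dz : evs f x2 - evs g x2 != 0 by rewrite subr_eq0.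
    apply: (mulIf dz).
    have : evs f y + t * (evs f x2 - evs f x1) - (evs g y + t * (evs g x2 - evs g x1))
      = evs f y' + t' * (evs f x2 - evs f x1) - (evs g y' + t' * (evs g x2 - evs g x1))
      by exact: H1.
    rewrite ey ey' e1 => H2.
    have -> : t * (evs f x2 - evs g x2) = evs g y + t * (evs f x2 - evs g x1) - (evs g y + t * (evs g x2 - evs g x1)) by ring.
    rewrite H2; ring.
  subst t'; congr (_, _).
  apply/ffunP => i.
  have := congr1 (fun z : {ffun 'I_m -> 'I_N} => ((z i : nat)%:R : 'F_N)) E.
  rewrite /shift /= !ffunE !toIK => /addIr /(congr1 (@tonat N)).
  rewrite !natFK // => eyi; exact: val_inj.
apply: subset_leq_card; apply/subsetP => z /imsetP[[y t]].
rewrite !inE /= andbT => /andP[yS _] ->.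
exact: cS.
Qed.

Definition xlist N m (x : {ffun 'I_m -> 'I_N}) : seq nat := [seq val (x i) | i <- enum 'I_m].

Lemma xlist_inj N m : injective (@xlist N m).
Proof.
move=> x y /eqP; rewrite /xlist => /eqP /eq_in_map E.
apply/ffunP => i; apply: val_inj; apply: E; by rewrite mem_enum.
Qed.

Lemma closedI N m (hN : prime N) (S : {set {ffun 'I_m -> 'I_N}}) (P : {ffun 'I_m -> 'I_N} -> bool) :
  closedS hN S ->
  (forall y x1 x2 t, y \in S -> x1 \in S -> x2 \in S -> P y -> P x1 -> P x2 ->
       P (shift (prime_gt0 hN) y x1 x2 t)) ->
  closedS hN [set x in S | P x].
Proof.
move=> cS HP y x1 x2 t; rewrite !inE => /andP[yS Py] /andP[x1S P1] /andP[x2S P2].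
by rewrite cS // HP.
Qed.

Lemma evs_cst N m (hN : prime N) (v : nat) (x : {ffun 'I_m -> 'I_N}) :
  (v < N)%N -> tonat (evs ((v%:R : 'F_N), fun _ => 0) x) = v.
Proof.
move=> vN; rewrite /evs big1 => [|l _]; last by rewrite mul0r.
by rewrite addr0 natFK.
Qed.

Definition svL N m (bs : seq bool) s : option (sym N m) :=
  if (bits_value bs s < N)%N then Some ((bits_value bs s)%:R, fun _ => 0) else None.

Lemma step_label N m (hN : prime N) bs s (ses : seq (option (sym N m))) x :
  step N (bs, semE x ses) (LabelG s) = (bs, semE x (rcons ses (svL N m bs s))).
Proof.
rewrite /step /semE map_rcons /svL; case: ifP => // vN.
congr (_, rcons _ _); exact: (congr1 Some (esym (evs_cst hN x vN))).
Qed.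

Definition svO N m (bs : seq bool) (ses : seq (option (sym N m))) i j k : option (sym N m) :=
    match nth None ses i, nth None ses j with
    | Some f, Some g => Some (f.1 + (nth false bs k : nat)%:R * g.1,
                              fun l => f.2 l + (nth false bs k : nat)%:R * g.2 l)
    | _, _ => None end.

Lemma step_op N m (hN : prime N) bs (ses : seq (option (sym N m))) i j k x :
  step N (bs, semE x ses) (OpG i j k) = (bs, semE x (rcons ses (svO bs ses i j k))).
Proof.
rewrite /step /semE map_rcons -/(semE x ses) /svO !nth_semE.
case: (nth None ses i) => [f|] //; case: (nth None ses j) => [g|] //.
congr (_, rcons _ _).
have H : tonat (evs (f.1 + (nth false bs k : nat)%:R * g.1,
                     fun l => f.2 l + (nth false bs k : nat)%:R * g.2 l) x)
   = ((tonat (evs f x) + nth false bs k * tonat (evs g x)) %% N)%N.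
  rewrite -val_Fp_nat //; congr nat_of_ord.
  rewrite natrD natrM /tonat !natr_Zp /evs /=.
  rewrite mulrDr addrACA mulr_sumr -big_split /=; congr (_ + _).
  by apply: eq_bigr => l _; rewrite mulrDl mulrA.
exact: (congr1 Some (esym H)).
Qed.

Definition ansE N m (ses : seq (option (sym N m))) i j x :=
    match nth None ses i, nth None ses j with
    | Some f, Some g => evs f x == evs g x | _, _ => false end.

Lemma step_eq N m bs (ses : seq (option (sym N m))) i j x :
  step N (bs, semE x ses) (EqG i j) = (rcons bs (ansE ses i j x), semE x ses).
Proof.
rewrite /step /ansE !nth_semE.
by case: (nth None ses i) => [f|] //; case: (nth None ses j) => [g|].
Qed.

Lemma core N m (hN : prime N) (out : seq bool -> seq nat) gs :
  forall (S : {set {ffun 'I_m -> 'I_N}}) bs (ses : seq (option (sym N m))) d,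
  closedS hN S -> (#|S| <= N ^ d)%N ->
  (#|[set x in S | out (foldl (step N) (bs, semE x ses) gs).1 == xlist x]|
     <= Bf (size (eq_inputs gs)) d)%N.
Proof.
elim: gs => [|g gs IH] S bs ses d cS hS.
  rewrite Bf0q /=; apply/card_le1_eqP => x y; rewrite !inE => /andP[_ /eqP ex] /andP[_ /eqP ey].
  by apply: xlist_inj; rewrite -ex -ey.
case: g => [f|s|i j k|i j].
- exact: IH.
- suff -> : [set x in S | out (foldl (step N) (bs, semE x ses) (LabelG s :: gs)).1 == xlist x]
          = [set x in S | out (foldl (step N) (bs, semE x (rcons ses (svL N m bs s))) gs).1 == xlist x].
    exact: IH.
  apply/setP => x; rewrite !inE.
  by rewrite -[foldl _ _ (_ :: _)]/(foldl (step N) (step N (bs, semE x ses) (LabelG s)) gs) step_label.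
- suff -> : [set x in S | out (foldl (step N) (bs, semE x ses) (OpG i j k :: gs)).1 == xlist x]
          = [set x in S | out (foldl (step N) (bs, semE x (rcons ses (svO bs ses i j k))) gs).1 == xlist x].
    exact: IH.
  apply/setP => x; rewrite !inE.
  by rewrite -[foldl _ _ (_ :: _)]/(foldl (step N) (step N (bs, semE x ses) (OpG i j k)) gs) step_op.
-
  set ans := ansE ses i j.
  set P := fun (c : bool) (x : {ffun 'I_m -> 'I_N}) =>
    out (foldl (step N) (rcons bs c, semE x ses) gs).1 == xlist x.
  have -> : [set x in S | out (foldl (step N) (bs, semE x ses) (EqG i j :: gs)).1 == xlist x]
          = [set x in S | P (ans x) x].
    apply/setP => x; rewrite !inE.
    by rewrite -[foldl _ _ (_ :: _)]/(foldl (step N) (step N (bs, semE x ses) (EqG i j)) gs) step_eq.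
  set S1 := [set x in S | ans x].
  have cS1 : closedS hN S1.
    apply: closedI => // y x1 x2 t _ _ _; rewrite /ans /ansE.
    case: (nth None ses i) => [f|] //; case: (nth None ses j) => [g|] //=.
    by move=> /eqP ey /eqP e1 /eqP e2; rewrite !evs_shift ey e1 e2.
  have sub : [set x in S | P (ans x) x] \subset
             [set x in S1 | P true x] :|: [set x in S | P false x].
    apply/subsetP => x; rewrite !inE => /andP[xS]; case E: (ans x) => Px.
      by rewrite ?xS ?E ?Px.
    by rewrite xS Px orbT.
  have cardU : (#|[set x in S | P (ans x) x]| <=
             #|[set x in S1 | P true x]| + #|[set x in S | P false x]|)%N.
    apply: leq_trans (subset_leq_card sub) _; rewrite cardsU; exact: leq_subr.
  rewrite /= -/(eq_inputs gs) /=.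
  have IHt : forall d', (#|S1| <= N ^ d')%N -> (#|[set x in S1 | P true x]| <= Bf (size (eq_inputs gs)) d')%N.
    by move=> d' h; apply: IH.
  have IHf : (#|[set x in S | P false x]| <= Bf (size (eq_inputs gs)) d)%N by apply: IH.
  have S1sub : S1 \subset S by apply/subsetP => x; rewrite inE => /andP[].
  case: (boolP [forall x in S, ans x]) => [/forall_inP allt | /forall_inPn [x1 x1S nx1]].
    have -> : [set x in S | P (ans x) x] = [set x in S1 | P true x].
      apply/setP => x; rewrite !inE; case xS: (x \in S) => //=; by rewrite allt.
    apply: leq_trans (IHt d _) (Bf_mono _ _) => //.
    by apply: leq_trans (subset_leq_card S1sub) hS.
  case: (boolP [exists x in S, ans x]) => [/exists_inP [x2 x2S ax2] | /exists_inPn allf].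
    have [f [g [ei ej]]] : exists f g, nth None ses i = Some f /\ nth None ses j = Some g.
      move: ax2; rewrite /ans /ansE.
      case: (nth None ses i) => [f|] //; case: (nth None ses j) => [g|] //= _.
      by exists f, g.
    have e2 : evs f x2 = evs g x2 by move: ax2; rewrite /ans /ansE ei ej => /eqP.
    have ne1 : evs f x1 != evs g x1 by move: nx1; rewrite /ans /ansE ei ej.
    have hsh := shrink cS x2S x1S e2 ne1.
    have eS1 : [set x in S | evs f x == evs g x] = S1.
      by apply/setP => x; rewrite !inE /ans /ansE ei ej.
    rewrite eS1 in hsh.
    case: d hS IHf => [|d] hS IHf.
      (* |S| <= 1 but x1 <> x2 *)
      exfalso; move: hS; rewrite expn0 => /card_le1_eqP /(_ x1 x2 x1S x2S) ex.
      by rewrite ex in e2; rewrite e2 eqxx in ne1.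
    rewrite BfS addnC; apply: leq_trans cardU _; apply: leq_add => //.
    apply: IHt.
    rewrite -(@leq_pmul2l N) ?prime_gt0 //; apply: leq_trans hsh _; by rewrite -expnS.
  have -> : [set x in S | P (ans x) x] = [set x in S | P false x].
    apply/setP => x; rewrite !inE; case xS: (x \in S) => //=.
    by rewrite (negbTE (allf x xS)).
  apply: leq_trans IHf _.
  case: d {hS IHt} => [|d]; first by rewrite !Bf0.
  by rewrite BfS leq_addr.
Qed.


Lemma Bf_real (R : realType) (Q m : nat) : (0 < m)%N -> (m <= Q)%N ->
  ((Bf Q m)%:R : R) <= (expR 1 * Q%:R / m%:R) ^+ m.
Proof.
move=> m0 mQ.
have Q0 : (0 < Q)%N by apply: leq_trans mQ.
have Qp : (0 : R) < Q%:R by rewrite ltr0n.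
have mp : (0 : R) < m%:R by rewrite ltr0n.
pose r : R := m%:R / Q%:R.
have r0 : 0 < r by rewrite divr_gt0.
have r1 : r <= 1 by rewrite ler_pdivrMr // mul1r ler_nat.
have H1 : r ^+ m * (Bf Q m)%:R <= (1 + r) ^+ Q.
  rewrite addrC exprD1n /Bf natr_sum mulr_sumr.
  rewrite (big_ord_widen Q.+1 (fun i => r ^+ m * ('C(Q, i))%:R)) //.
  rewrite [X in _ <= X](bigID (fun i : 'I_Q.+1 => (i < m.+1)%N)) /=.
  rewrite -[X in X <= _]addr0; apply: lerD.
    apply: ler_sum => i im; rewrite mulr_natr; apply: ler_wMn2r.
    apply: ler_wiXn2l; [exact: ltW | exact: r1 | by rewrite -ltnS].
  by apply: sumr_ge0 => i _; apply: mulrn_wge0; apply: exprn_ge0; exact: ltW.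
have H2 : (1 + r) ^+ Q <= expR 1 ^+ m.
  apply: le_trans (_ : expR r ^+ Q <= _).
    apply: lerXn2r; rewrite ?nnegrE ?expR_ge0 //; last exact: expR_ge1Dx.
    by rewrite addr_ge0 // ltW.
  rewrite -expRM_natl /r mulrCA divff ?mulr1; last by rewrite gt_eqF.
  by rewrite -[m%:R]mulr1 expRM_natl.
have := le_trans H1 H2.
rewrite mulrC -ler_pdivlMr ?exprn_gt0 // => H.
apply: (le_trans H); rewrite -expr_div_n /r invf_div mulrA.
by [].
Qed.
Local Close Scope ring_scope.

Fixpoint tri W : seq (nat * nat) :=
  match W with 0 => [::] | W'.+1 => tri W' ++ [seq (a, W') | a <- iota 0 W'.+1] end.

Lemma tri_S W : tri W.+1 = tri W ++ [seq (a, W) | a <- iota 0 W.+1].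
Proof. by []. Qed.

Lemma size_tri W : 2 * size (tri W) = W * W.+1.
Proof. elim: W => [|W IH] //; rewrite tri_S size_cat size_map size_iota; lia. Qed.

Lemma mem_tri W a b : ((a, b) \in tri W) = (a <= b < W).
Proof.
elim: W => [|W IH]; first by rewrite /= ltn0 andbF.
rewrite tri_S mem_cat IH; apply/orP/idP.
  case=> [H|/mapP[c]]; first lia.
  by rewrite mem_iota => H [-> ->]; lia.
move=> H; case: (ltnP b W) => bW; first by left; lia.
right; apply/mapP; exists a; first by rewrite mem_iota; lia.
congr pair; lia.
Qed.

Lemma wf_eq N gs : forall nb ne, wf_gates N nb ne gs ->
  all (fun p => (p.1 <= p.2 < ne + count is_costly gs)%N) (eq_inputs gs).
Proof.
elim: gs => [|g gs IH] nb ne //=.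
case: g => [f|s|i j k|i j] /=.
- by move/IH.
- move=> /andP[_ /IH]; apply: sub_all => p /andP[-> h] /=; by rewrite addnS -addSn.
- move=> /and4P[_ _ _ /IH]; apply: sub_all => p /andP[-> h] /=; by rewrite addnS -addSn.
- move=> /and3P[hi hj /IH] H; apply/andP; split; last exact: H.
  rewrite /=; lia.
Qed.
Local Open Scope ring_scope.

Lemma q_bound N m T (A : algo) : (0 < m)%N -> wf_algo N m A -> eq_distinct A ->
  (group_cost A <= T)%N -> (2 * size (eq_inputs (gates A)) <= (T + 2 * m + 1) ^ 2)%N.
Proof.
move=> m0 wf ed cT.
have Hall := wf_eq wf.
set W := (m.+1 + count is_costly (gates A))%N in Hall.
have le : (size (eq_inputs (gates A)) <= size (tri W))%N.
  apply: uniq_leq_size => // -[a b] hp.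
  by rewrite mem_tri; exact: (allP Hall _ hp).
have := size_tri W; rewrite /group_cost in cT; rewrite /W in le *.
nia.
Qed.

Lemma evs_unit N m (hN : prime N) (x : {ffun 'I_m -> 'I_N}) (i : 'I_m) :
  tonat (evs (0, fun k => ((k == i) : nat)%:R) x) = x i.
Proof.
rewrite /evs (bigD1 i) // big1 => [|k /negbTE ki]; cbn [fst snd].
  rewrite eqxx mul1r add0r -[X in tonat X]/((x i : nat)%:R + 0) addr0 natFK //.
by rewrite ki mul0r.
Qed.

Definition ses0 N m : seq (option (sym N m)) :=
  Some (1%:R, fun _ => 0) :: [seq Some (0, fun k => ((k == i) : nat)%:R) | i <- enum 'I_m].

Lemma semE_tail N m (hN : prime N) (x : {ffun 'I_m -> 'I_N}) :
  semE x [seq Some (0, fun k => ((k == i) : nat)%:R) | i <- enum 'I_m]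
  = [seq Some (val (x i)) | i <- enum 'I_m].
Proof.
rewrite /semE -map_comp; apply: eq_map => i.
exact: (congr1 Some (evs_unit hN x i)).
Qed.

Lemma semE0 N m (hN : prime N) (x : {ffun 'I_m -> 'I_N}) :
  semE x (ses0 N m) = Some 1%N :: [seq Some (val (x i)) | i <- enum 'I_m].
Proof.
have E : forall a s, semE x (a :: s) = omap (fun f => tonat (evs f x)) a :: semE x s by [].
rewrite /ses0 E semE_tail //.
congr (_ :: _); exact: (congr1 Some (evs_cst hN x (prime_gt1 hN))).
Qed.

Lemma per_coins N m (hN : prime N) (A : algo) (c : {ffun 'I_(rbits A) -> bool}) :
  (#|[set x | @succeeds N m A c x]| <= Bf (size (eq_inputs (gates A))) m)%N.
Proof.
have := @core N m hN (output A) (gates A) [set: {ffun 'I_m -> 'I_N}]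
   [seq c i | i <- enum 'I_(rbits A)] (ses0 N m) m.
rewrite cardsT card_ffun !card_ord leqnn => /(_ _ isT).
have -> : [set x in [set: {ffun 'I_m -> 'I_N}] |
      output A (foldl (step N) ([seq c i | i <- enum 'I_(rbits A)], semE x (ses0 N m)) (gates A)).1 == xlist x]
      = [set x | @succeeds N m A c x].
  apply/setP => x; rewrite !inE /succeeds /run semE0 //.
apply; by move=> y x1 x2 t; rewrite !inE.
Qed.

Lemma count_pairs N m (hN : prime N) (A : algo) :
  (#|[set p : {ffun 'I_(rbits A) -> bool} * {ffun 'I_m -> 'I_N} | @succeeds N m A p.1 p.2]|
    <= 2 ^ rbits A * Bf (size (eq_inputs (gates A))) m)%N.
Proof.
set S := [set p : {ffun 'I_(rbits A) -> bool} * {ffun 'I_m -> 'I_N} | @succeeds N m A p.1 p.2].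
rewrite -sum1_card big_mkcond /=.
rewrite (eq_bigr (fun p => (fun c x => if (c, x) \in S then 1%N else 0%N) p.1 p.2)); last first.
  by move=> [c x] _.
rewrite -(pair_bigA _ (fun c x => if (c, x) \in S then 1%N else 0%N)) /=.
have -> : (2 ^ rbits A)%N = #|{ffun 'I_(rbits A) -> bool}| by rewrite card_ffun card_bool card_ord.
rewrite -sum_nat_const; apply: leq_sum => c _.
rewrite -big_mkcond /= (eq_bigl (fun x => x \in [set x | @succeeds N m A c x])); last first.
  by move=> x; rewrite !inE.
rewrite sum1_card; exact: per_coins.
Qed.

Theorem mainTheorem4 (R : realType) :
  exists C : R, 0 < C /\
  forall (N m T : nat) (A : algo),
    prime N -> (0 < m)%N ->
    wf_algo N m A -> eq_distinct A -> (group_cost A <= T)%N ->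
    success_prob R N m A <=
      C * (expR 1 * ((T + 2 * m + 1) ^ 2)%N%:R / (2 * m * N)%N%:R) ^+ m.
Proof.
exists 1; split => // N m T A hN m0 wf ed cT.
rewrite mul1r.
set q := size (eq_inputs (gates A)).
set Q := maxn q m.
have Np : (0 : R) < N%:R by rewrite ltr0n prime_gt0.
have mp : (0 : R) < m%:R by rewrite ltr0n.
have tp : (0 : R) < (2 ^ rbits A)%:R by rewrite ltr0n expn_gt0.
have h1 : success_prob R N m A <= (Bf q m)%:R / (N ^ m)%:R.
  rewrite /success_prob natrM ler_pdivrMr ?mulr_gt0 ?ltr0n ?expn_gt0 ?prime_gt0 //.
  rewrite [(2 ^ rbits A)%:R * _]mulrC mulrA divfK; last by rewrite pnatr_eq0 -lt0n expn_gt0 prime_gt0.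
  by rewrite -natrM ler_nat mulnC count_pairs.
apply: le_trans h1 _.
have h2 : ((Bf q m)%:R : R) <= (expR 1 * Q%:R / m%:R) ^+ m.
  apply: le_trans (Bf_real R m0 (leq_maxr q m)).
  by rewrite ler_nat Bf_mono // leq_maxl.
have qb := q_bound m0 wf ed cT.
have QK : (2 * Q <= (T + 2 * m + 1) ^ 2)%N.
  have : (2 * m <= (T + 2 * m + 1) ^ 2)%N by nia.
  rewrite /Q; lia.
rewrite ler_pdivrMr ?ltr0n ?expn_gt0 ?prime_gt0 //.
apply: le_trans h2 _.
rewrite [(N ^ m)%:R]natrX -exprMn; apply: lerXn2r.
- by rewrite nnegrE divr_ge0 ?mulr_ge0 ?expR_ge0 ?ler0n.
- by rewrite nnegrE mulr_ge0 ?divr_ge0 ?mulr_ge0 ?expR_ge0 ?ler0n.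
have -> : expR 1 * ((T + 2 * m + 1) ^ 2)%N%:R / (2 * m * N)%N%:R * N%:R
   = expR 1 * (((T + 2 * m + 1) ^ 2)%N%:R / (2 * m)%N%:R) :> R.
  rewrite !natrM; field.
  apply/andP; split; rewrite pnatr_eq0 -lt0n; [exact: m0 | exact: prime_gt0 hN].
rewrite -mulrA ler_wpM2l ?expR_ge0 //.
rewrite ler_pdivrMr // mulrAC ler_pdivlMr ?ltr0n ?muln_gt0 ?m0 //.
rewrite -!natrM ler_nat.
have : (2 * Q * m <= (T + 2 * m + 1) ^ 2 * m)%N by rewrite leq_mul2r QK orbT.
lia.
Qed.
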